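(* For every $\mathsf V$-category $X=(X,a)$, the set $\tilde X$ of tight $\mathsf V$-functors $X^{\mathrm{op}}\to\mathsf V$ coincides with the L-closure of $y(X)$ in $\hat X$. Hence the Yoneda functor $y:X\to\tilde X$ is fully faithful and L-dense, and $\tilde X$ is L-complete.
   Context: Let $\mathsf V=(\mathsf V,\otimes,k)$ be a commutative unital quantale (complete lattice with commutative associative $\otimes$, neutral element $k$, $u\otimes(-)$ preserving suprema), with internal hom $z\le u\multimap v\iff z\otimes u\le v$. A $\mathsf V$-category $(X,a)$ is a set with $a:X\times X\to\mathsf V$, $k\le a(x,x)$, $a(x,y)\otimes a(y,z)\le a(x,z)$; a $\mathsf V$-functor $f:(X,a)\to(Y,b)$ satisfies $a(x,y)\le b(f(x),f(y))$; subsets carry the restricted structure. For $\mathsf V$-functors $f,g:Z\to(Y,b)$, $f\cong g$ means $k\le b(f(z),g(z))$ and $k\le b(g(z),f(z))$ for all $z$; for points, $x\cong y$ means $k\le a(x,y)$ and $k\le a(y,x)$. The L-closure of $M\subseteq X$ is $\overline M=\{x\in X\mid$ for all $\mathsf V$-functors $f,g:X\to Y$ with $f|_M=g|_M$ one has $f(x)\cong g(x)\}$. A $\mathsf V$-relation from $X$ to $Y$ is a map $X\times Y\to\mathsf V$, composed by $(s\cdot r)(x,z)=\bigvee_y r(x,y)\otimes s(y,z)$. A $\mathsf V$-module $\varphi:(X,a)\to(Y,b)$ is a $\mathsf V$-relation with $\varphi\cdot a\le\varphi$, $b\cdot\varphi\le\varphi$; for a $\mathsf V$-functor $f:Z\to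 X$, $f_*(z,x)=a(f(z),x)$, $f^*(x,z)=a(x,f(z))$; $\varphi\dashv\psi$ for $\varphi:Z\to X$, $\psi:X\to Z$ means $c\le\psi\cdot\varphi$ and $\varphi\cdot\psi\le a$. $X$ is L-complete if every such adjunction is $f_*\dashv f^*$ for some $\mathsf V$-functor $f:Z\to X$. $f:(X,a)\to(Y,b)$ is fully faithful if $a(x,x')=b(f(x),f(x'))$ and L-dense if $b(y,y')=\bigvee_x b(y,f(x))\otimes b(f(x),y')$. $X^{\mathrm{op}}=(X,a^\circ)$, $a^\circ(x,y)=a(y,x)$; $\mathsf V$ has structure $\multimap$. $\hat X$ is the set of $\mathsf V$-functors $X^{\mathrm{op}}\to\mathsf V$ with $\hat a(f,f')=\bigwedge_x f(x)\multimap f'(x)$, and $y:X\to\hat X$, $y(x)=a(-,x)$. With $E=(\{\star\},k)$, each $\psi\in\hat X$ is a module $X\to E$ via $\psi(x,\star)=\psi(x)$, and $\psi$ is tight if this module has a left adjoint; $\tilde X\subseteq\hat X$ is the set of tight elements with induced structure. *)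

(* Defs.v *)
Set Implicit Arguments.
Unset Strict Implicit.

Record quantale := Quantale {
  qcar :> Type;
  qle : qcar -> qcar -> Prop;
  qle_refl : forall x, qle x x;
  qle_trans : forall x y z, qle x y -> qle y z -> qle x z;
  qle_antisym : forall x y, qle x y -> qle y x -> x = y;
  qsup : (qcar -> Prop) -> qcar;
  qsup_ub : forall (S : qcar -> Prop) x, S x -> qle x (qsup S);
  qsup_least : forall (S : qcar -> Prop) z, (forall x, S x -> qle x z) -> qle (qsup S) z;
  qten : qcar -> qcar -> qcar;
  qk : qcar;
  qtenA : forall u v w, qten u (qten v w) = qten (qten u v) w;
  qtenC : forall u v, qten u v = qten v u;
  qten1 : forall u, qten qk u = u;
  qten_sup : forall u (S : qcar -> Prop),
    qten u (qsup S) = qsup (fun w => exists v, S v /\ w = qten u v)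
}.

Arguments qle {q}.
Arguments qsup {q}.
Arguments qten {q}.
Arguments qk {q}.

Section Defs.
Variable V : quantale.

Definition isup (I : Type) (F : I -> V) : V := qsup (fun w => exists i, w = F i).
Definition qinf (S : V -> Prop) : V := qsup (fun z => forall x, S x -> qle z x).
Definition iinf (I : Type) (F : I -> V) : V := qinf (fun w => exists i, w = F i).

(** internal hom: [z <= u -o v  <->  z (x) u <= v] *)
Definition qhom (u v : V) : V := qsup (fun z => qle (qten z u) v).

Definition Vcat (X : Type) (a : X -> X -> V) : Prop :=
  (forall x, qle qk (a x x)) /\
  (forall x y z, qle (qten (a x y) (a y z)) (a x z)).

Definition Vfunctor (X Y : Type) (a : X -> X -> V) (b : Y -> Y -> V) (f : X -> Y) : Prop :=
  forall x x', qle (a x x') (b (f x) (f x')).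

Definition Lclosure (X : Type) (a : X -> X -> V) (M : X -> Prop) (x : X) : Prop :=
  forall (Y : Type) (b : Y -> Y -> V), Vcat b ->
  forall f g : X -> Y, Vfunctor a b f -> Vfunctor a b g ->
  (forall m, M m -> f m = g m) ->
  qle qk (b (f x) (g x)) /\ qle qk (b (g x) (f x)).

(** V-relations, composition [(s . r)(x,z) = sup_y r(x,y) (x) s(y,z)]:
    [rcomp r s] is  s . r *)
Definition rcomp (X Y Z : Type) (r : X -> Y -> V) (s : Y -> Z -> V) : X -> Z -> V :=
  fun x z => isup (fun y => qten (r x y) (s y z)).

Definition Vmodule (X Y : Type) (a : X -> X -> V) (b : Y -> Y -> V) (phi : X -> Y -> V) : Prop :=
  (forall x y, qle (rcomp a phi x y) (phi x y)) /\
  (forall x y, qle (rcomp phi b x y) (phi x y)).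

Definition Vadj (Z X : Type) (c : Z -> Z -> V) (a : X -> X -> V)
  (phi : Z -> X -> V) (psi : X -> Z -> V) : Prop :=
  (forall z z', qle (c z z') (rcomp phi psi z z')) /\
  (forall x x', qle (rcomp psi phi x x') (a x x')).

(** L-completeness: every adjunction of modules phi -| psi with phi : Z -+-> X
    is f_* -| f^* for some V-functor f : Z -> X. *)
Definition Lcomplete (X : Type) (a : X -> X -> V) : Prop :=
  forall (Z : Type) (c : Z -> Z -> V), Vcat c ->
  forall (phi : Z -> X -> V) (psi : X -> Z -> V),
  Vmodule c a phi -> Vmodule a c psi -> Vadj c a phi psi ->
  exists f : Z -> X, Vfunctor c a f /\
    (forall z x, phi z x = a (f z) x) /\ (forall x z, psi x z = a x (f z)).

Definition fully_faithful (X Y : Type) (a : X -> X -> V) (b : Y -> Y -> V) (f : X -> Y) : Prop :=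
  forall x x', a x x' = b (f x) (f x').

Definition Ldense (X Y : Type) (b : Y -> Y -> V) (f : X -> Y) : Prop :=
  forall y y', b y y' = isup (fun x => qten (b y (f x)) (b (f x) y')).

Definition opp (X : Type) (a : X -> X -> V) : X -> X -> V := fun x y => a y x.

Definition Xhat (X : Type) (a : X -> X -> V) : Type :=
  { f : X -> V | Vfunctor (opp a) qhom f }.

Definition hat (X : Type) (a : X -> X -> V) (p q : Xhat a) : V :=
  iinf (fun x => qhom (proj1_sig p x) (proj1_sig q x)).

Lemma yoneda_functor (X : Type) (a : X -> X -> V) (HX : Vcat a) (x : X) :
  Vfunctor (opp a) qhom (fun y => a y x).
Proof.
  intros y y'. unfold opp, qhom. apply qsup_ub. apply (proj2 HX).
Qed.

Definition yoneda (X : Type) (a : X -> X -> V) (HX : Vcat a) (x : X) : Xhat a :=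
  exist _ (fun y => a y x) (yoneda_functor HX x).

Definition Ecat : unit -> unit -> V := fun _ _ => qk.

(** tight presheaves: the module psi : X -+-> E, psi(x,star) = psi(x), has a left adjoint *)
Definition tight (X : Type) (a : X -> X -> V) (p : Xhat a) : Prop :=
  exists phi : unit -> X -> V,
    Vmodule Ecat a phi /\ Vadj Ecat a phi (fun x _ => proj1_sig p x).

Definition Xtilde (X : Type) (a : X -> X -> V) : Type := { p : Xhat a | tight p }.

Definition tildehom (X : Type) (a : X -> X -> V) (p q : Xtilde a) : V :=
  hat (proj1_sig p) (proj1_sig q).

End Defs.

(* Main.v *)
Require Import Defs.

Section Q.
Variable V : quantale.
Local Notation "x <<= y" := (@qle V x y) (at level 70).
Local Notation "x ** y" := (@qten V x y) (at level 40, left associativity).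

Lemma le_trans' (x y z : V) : x <<= y -> y <<= z -> x <<= z.
Proof. apply qle_trans. Qed.
Lemma le_refl' (x : V) : x <<= x. Proof. apply qle_refl. Qed.

Lemma isup_ub' I (F : I -> V) i : F i <<= isup F.
Proof. apply qsup_ub. exists i; reflexivity. Qed.
Lemma isup_least' I (F : I -> V) z : (forall i, F i <<= z) -> isup F <<= z.
Proof. intro H. apply qsup_least. intros x [i ->]. apply H. Qed.
Lemma iinf_lb' I (F : I -> V) i : iinf F <<= F i.
Proof. apply qsup_least. intros z Hz. apply Hz. exists i; reflexivity. Qed.
Lemma iinf_glb' I (F : I -> V) z : (forall i, z <<= F i) -> z <<= iinf F.
Proof. intro H. apply qsup_ub. intros x [i ->]. apply H. Qed.

Lemma ten_mono_r (u x y : V) : x <<= y -> u ** x <<= u ** y.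
Proof.
  intro H.
  assert (E : y = qsup (fun w => w = x \/ w = y)).
  { apply qle_antisym. apply qsup_ub; auto.
    apply qsup_least. intros w [->| ->]; auto using qle_refl. }
  rewrite E, qten_sup. apply qsup_ub. exists x; auto.
Qed.
Lemma ten_mono (x x' y y' : V) : x <<= x' -> y <<= y' -> x ** y <<= x' ** y'.
Proof.
  intros H1 H2. apply le_trans' with (x ** y').
  apply ten_mono_r; auto.
  rewrite (qtenC x), (qtenC x'). apply ten_mono_r; auto.
Qed.
Lemma ten1r (u : V) : u ** qk = u. Proof. rewrite qtenC; apply qten1. Qed.

Lemma hom_adj (z u v : V) : z <<= qhom u v <-> z ** u <<= v.
Proof.
  split; intro H.
  - apply le_trans' with (qhom u v ** u). apply ten_mono; auto using qle_refl.
    unfold qhom. rewrite qtenC, qten_sup. apply qsup_least.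
    intros w [t [Ht ->]]. rewrite qtenC; auto.
  - apply qsup_ub; auto.
Qed.

Lemma ten_isup_le (u : V) I (F : I -> V) t :
  (forall i, u ** F i <<= t) -> u ** isup F <<= t.
Proof.
  intro H. unfold isup. rewrite qten_sup. apply qsup_least.
  intros w [v [[i ->] ->]]. apply H.
Qed.

Lemma kk : (qk : V) <<= qk ** qk. Proof. rewrite qten1; apply qle_refl. Qed.

Lemma swap4 (p q r s : V) : (p ** q) ** (r ** s) = (p ** r) ** (q ** s).
Proof.
  rewrite <- !qtenA. f_equal. rewrite !qtenA. f_equal. apply qtenC.
Qed.


Section X.
Variable X : Type.
Variable a : X -> X -> V.
Hypothesis HX : Vcat a.
Local Notation pv := (@proj1_sig _ _).
Local Notation yo := (yoneda HX).

Lemma psh (p : Xhat a) x x' : a x' x ** pv p x <<= pv p x'.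
Proof. apply hom_adj. apply (proj2_sig p). Qed.

Lemma evl (p q : Xhat a) x : pv p x ** hat p q <<= pv q x.
Proof.
  rewrite qtenC. apply hom_adj. unfold hat.
  exact (iinf_lb' X (fun x => qhom (pv p x) (pv q x)) x).
Qed.

Lemma hat_intro (p q : Xhat a) z : (forall x, z ** pv p x <<= pv q x) -> z <<= hat p q.
Proof. intro H. apply iinf_glb'. intro x. apply hom_adj, H. Qed.

Lemma hat_trans (p q r : Xhat a) : hat p q ** hat q r <<= hat p r.
Proof.
  apply hat_intro. intro x.
  rewrite <- qtenA, (qtenC (hat q r)), qtenA.
  apply le_trans' with (pv q x ** hat q r).
  apply ten_mono. rewrite qtenC; apply evl. apply le_refl'.
  apply evl.
Qed.

Lemma hat_refl (p : Xhat a) : qk <<= hat p p.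
Proof. apply hat_intro. intro; rewrite qten1; apply le_refl'. Qed.

Lemma hat_yo (q : Xhat a) x : hat (yo x) q = pv q x.
Proof.
  apply qle_antisym.
  - rewrite <- (qten1 (hat (yo x) q)). apply le_trans' with (a x x ** hat (yo x) q).
    apply ten_mono. apply (proj1 HX). apply le_refl'.
    apply (evl (yo x) q x).
  - apply hat_intro. intro y. simpl. rewrite qtenC. apply psh.
Qed.

Lemma hat_yy x x' : hat (yo x) (yo x') = a x x'.
Proof. rewrite hat_yo. reflexivity. Qed.

Lemma tight_bound (p : Xhat a) (z t : V) : tight p ->
  (forall x, z ** (hat p (yo x) ** pv p x) <<= t) -> z <<= t.
Proof.
  intros [phi [Hm [A1 A2]]] H.
  rewrite <- (ten1r z).
  apply le_trans' with (z ** isup (fun y => phi tt y ** pv p y)).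
  apply ten_mono_r. apply (A1 tt tt).
  apply ten_isup_le. intro x. apply le_trans' with (2 := H x).
  apply ten_mono_r. apply ten_mono. 2: apply le_refl'.
  apply hat_intro. intro y. simpl. rewrite qtenC.
  apply le_trans' with (2 := A2 y x).
  exact (isup_ub' unit (fun u : unit => pv p y ** phi u x) tt).
Qed.

Lemma tight_Lcl (p : Xhat a) : tight p -> Lclosure (@hat V X a) (fun q => exists x, q = yo x) p.
Proof.
  intros Ht Y b [Hb1 Hb2] f g Ff Fg Hfg.
  assert (E : forall x, f (yo x) = g (yo x)) by (intro x; apply Hfg; eauto).
  split; apply (tight_bound p _ _ Ht); intro x; rewrite qten1, <- (hat_yo p x).
  - apply le_trans' with (2 := Hb2 _ (f (yo x)) _).
    apply ten_mono. apply Ff. rewrite E. apply Fg.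
  - apply le_trans' with (2 := Hb2 _ (f (yo x)) _).
    apply ten_mono. rewrite E. apply Fg. apply Ff.
Qed.

Lemma Vcat_hom : Vcat (@qhom V).
Proof.
  split.
  - intro u. apply hom_adj. rewrite qten1. apply le_refl'.
  - intros u v w. apply hom_adj. rewrite <- qtenA, (qtenC (qhom v w)), qtenA.
    apply le_trans' with (v ** qhom v w).
    apply ten_mono. apply hom_adj, le_refl'. apply le_refl'.
    rewrite qtenC; apply hom_adj, le_refl'.
Qed.

Lemma Lcl_tight (p : Xhat a) : Lclosure (@hat V X a) (fun q => exists x, q = yo x) p -> tight p.
Proof.
  intro HL.
  set (ph := fun x => hat p (yo x)).
  assert (Hmod : forall x y, ph y ** a y x <<= ph x).
  { intros x y. unfold ph. rewrite <- hat_yy. apply hat_trans. }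
  set (fF := fun q : Xhat a => isup (fun x => ph x ** proj1_sig q x)).
  set (gF := fun q : Xhat a => hat p q).
  assert (K : qk <<= fF p).
  { destruct (HL V (@qhom V) Vcat_hom gF fF) as [H1 _].
    - intros q q'. unfold gF. apply hom_adj. rewrite qtenC. apply hat_trans.
    - intros q q'. unfold fF. apply hom_adj. apply ten_isup_le.
      intro x. apply le_trans' with (ph x ** pv q' x).
      rewrite qtenA, (qtenC _ (ph x)), <- qtenA. apply ten_mono_r. rewrite qtenC. apply evl.
      exact (isup_ub' X (fun x => ph x ** pv q' x) x).
    - intros m [z ->]. unfold gF, fF. apply qle_antisym.
      + rewrite <- (ten1r (hat p (yo z))).
        apply le_trans' with (ph z ** a z z).
        apply ten_mono_r. apply (proj1 HX).
        exact (isup_ub' X (fun x => ph x ** pv (yo z) x) z).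
      + apply isup_least'. intro x. apply Hmod.
    - apply hom_adj in H1. rewrite qten1 in H1. unfold gF in H1.
      apply le_trans' with (2 := H1). apply hat_refl. }
  exists (fun _ x => ph x). split; [split|split].
  - intros u x. apply isup_least'. intro. unfold Ecat. rewrite qten1. apply le_refl'.
  - intros u x. apply isup_least'. intro y. apply Hmod.
  - intros u u'. exact K.
  - intros x x'. apply isup_least'. intro u. simpl.
    exact (evl p (yo x') x).
Qed.

Lemma yo_tight x : tight (yo x).
Proof.
  apply Lcl_tight. intros Y b [Hb1 _] f g _ _ Hfg.
  rewrite (Hfg (yo x)) by eauto. split; apply Hb1.
Qed.

Definition yt (x : X) : Xtilde a := exist _ (yo x) (yo_tight x).

Local Notation th := (@tildehom V X a).

Lemma th_yy x x' : th (yt x) (yt x') = a x x'.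
Proof. apply hat_yy. Qed.
Lemma th_yo (q : Xtilde a) x : th (yt x) q = pv (proj1_sig q) x.
Proof. apply hat_yo. Qed.

Lemma Ldense_yt : Ldense th yt.
Proof.
  intros [p Hp] [p' Hp']. unfold tildehom; simpl.
  apply qle_antisym.
  - apply (tight_bound p _ _ Hp). intro x.
    rewrite qtenC, <- qtenA.
    apply le_trans' with (hat p (yo x) ** hat (yo x) p').
    apply ten_mono_r. rewrite hat_yo. apply evl.
    exact (isup_ub' X (fun x => hat p (yo x) ** hat (yo x) p') x).
  - apply isup_least'. intro x. apply hat_trans.
Qed.

Lemma Lcomplete_th : Lcomplete th.
Proof.
  intros Z c Hc phi psi [Mf1 Mf2] [Mp1 Mp2] [A1 A2].
  assert (Mf2' : forall z q q', phi z q' ** th q' q <<= phi z q).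
  { intros z q q'. apply le_trans' with (2 := Mf2 z q).
    exact (isup_ub' _ (fun y => phi z y ** th y q) q'). }
  assert (Mp1' : forall z q q', th q q' ** psi q' z <<= psi q z).
  { intros z q q'. apply le_trans' with (2 := Mp1 q z).
    exact (isup_ub' _ (fun y => th q y ** psi y z) q'). }
  assert (Mp2' : forall q z z', psi q z' ** c z' z <<= psi q z).
  { intros q z z'. apply le_trans' with (2 := Mp2 q z).
    exact (isup_ub' _ (fun y => psi q y ** c y z) z'). }
  assert (A2' : forall q q' z, psi q z ** phi z q' <<= th q q').
  { intros q q' z. apply le_trans' with (2 := A2 q q').
    exact (isup_ub' _ (fun y => psi q y ** phi y q') z). }
  assert (KZ : forall z, qk <<= isup (fun x => phi z (yt x) ** psi (yt x) z)).
  { intro z. apply le_trans' with (1 := proj1 Hc z).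
    apply le_trans' with (1 := A1 z z). apply isup_least'.
    intros [q Hq]. apply (tight_bound q _ _ Hq). intro x.
    rewrite swap4, (qtenC (psi _ z)).
    rewrite <- (hat_yo q x).
    apply le_trans' with (phi z (yt x) ** psi (yt x) z).
    2: exact (isup_ub' X (fun x => phi z (yt x) ** psi (yt x) z) x).
    apply ten_mono.
    - apply (Mf2' z (yt x) (exist _ q Hq)).
    - apply (Mp1' z (yt x) (exist _ q Hq)). }
  assert (Fpsh : forall z, Vfunctor (opp a) (@qhom V) (fun x => psi (yt x) z)).
  { intros z x x'. unfold opp. apply hom_adj. rewrite <- th_yy. apply Mp1'. }
  set (Fh := fun z => exist _ (fun x => psi (yt x) z) (Fpsh z) : Xhat a).
  assert (Ft : forall z, tight (Fh z)).
  { intro z. exists (fun _ x => phi z (yt x)). split; [split|split].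
    - intros u x. apply isup_least'. intro. unfold Ecat. rewrite qten1. apply le_refl'.
    - intros u x. apply isup_least'. intro y. rewrite <- th_yy. apply Mf2'.
    - intros u u'. apply KZ.
    - intros x x'. apply isup_least'. intro u. simpl. rewrite <- th_yy. apply A2'. }
  set (f := fun z => exist _ (Fh z) (Ft z) : Xtilde a).
  assert (Epsi : forall q z, psi q z = th q (f z)).
  { intros [q Hq] z. apply qle_antisym.
    - apply hat_intro. intro x. simpl. rewrite qtenC.
      change (pv q x) with (pv (proj1_sig (exist _ q Hq : Xtilde a)) x).
      rewrite <- th_yo. apply Mp1'.
    - apply (tight_bound q _ _ Hq). intro x.
      rewrite (qtenC (hat _ _)), qtenA, (qtenC _ (pv q x)).
      apply le_trans' with (psi (yt x) z ** hat q (yo x)).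
      apply ten_mono. apply (evl q (Fh z) x). apply le_refl'.
      rewrite qtenC. apply (Mp1' z (exist _ q Hq) (yt x)). }
  assert (Ephi : forall z q, phi z q = th (f z) q).
  { intros z [q Hq]. apply qle_antisym.
    - apply hat_intro. intro x. simpl. rewrite qtenC.
      change (pv q x) with (pv (proj1_sig (exist _ q Hq : Xtilde a)) x).
      rewrite <- th_yo. apply A2'.
    - rewrite <- (ten1r (th (f z) _)).
      apply le_trans' with (th (f z) (exist _ q Hq) ** isup (fun x => phi z (yt x) ** psi (yt x) z)).
      apply ten_mono_r. apply KZ.
      apply ten_isup_le. intro x.
      rewrite qtenC, <- qtenA.
      apply le_trans' with (phi z (yt x) ** th (yt x) (exist _ q Hq)).
      apply ten_mono_r. rewrite th_yo. apply (evl (Fh z) q x).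
      apply Mf2'. }
  exists f. split; [|split].
  - intros z z'. rewrite <- Epsi.
    apply le_trans' with (qk ** c z z'). rewrite qten1. apply le_refl'.
    apply le_trans' with (psi (f z) z ** c z z').
    apply ten_mono. rewrite Epsi. apply hat_refl.
    apply le_refl'. apply Mp2'.
  - intros z q. apply Ephi.
  - intros q z. apply Epsi.
Qed.

End X.
End Q.

Theorem mainTheorem4 (V : quantale) (X : Type) (a : X -> X -> V) (HX : Vcat a) :
  (forall p : Xhat a,
      tight p <-> Lclosure (@hat V X a) (fun q => exists x, q = yoneda HX x) p) /\
  (exists yt : X -> Xtilde a,
      (forall x, proj1_sig (yt x) = yoneda HX x) /\
      Vfunctor a (@tildehom V X a) yt /\
      fully_faithful a (@tildehom V X a) yt /\
      Ldense (@tildehom V X a) yt /\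
      Lcomplete (@tildehom V X a)).
Proof.
  split.
  - intro p. split. apply tight_Lcl. apply Lcl_tight.
  - exists (@yt V X a HX). split; [|split; [|split; [|split]]].
    + intro x. reflexivity.
    + intros x x'. rewrite th_yy. apply qle_refl.
    + intros x x'. rewrite th_yy. reflexivity.
    + apply Ldense_yt.
    + apply Lcomplete_th; exact HX.
Qed.
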